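(* With $n=2p+1$ agents and complete information, the Majority voting mechanism with Random confirmations (RC mechanism) subgame perfect implements the majority rule: for every preference profile $R$, every subgame-perfect equilibrium yields the outcome $Maj(R)$, and some subgame-perfect equilibrium yields $Maj(R)$.
   Context: Agents $I=\{1,\dots,n\}$, $n=2p+1$, options $A=\{a,b\}$, strict preferences over $A$, commonly known. Majority rule: $Maj(R)=a$ if at least $p+1$ agents prefer $a$, else $b$. Lotteries are compared by stochastic dominance: an agent preferring $x$ weakly (strictly) prefers $\beta$ to $\eta$ iff $\beta(x)\ge\eta(x)$ ($>$). RC mechanism: Voting stage: each agent simultaneously votes $v_i\in A$; the profile $v$ is publicly announced; the option with more votes is the Voting-stage winner. Confirmation stage: a set of $p+1$ agents is drawn uniformly at random and ordered uniformly, $\pi=(\pi_1,\dots,\pi_{p+1})$; sequentially, as long as nobody has announced $Y$, agent $\pi_t$ announces $Y$ or $N$. If some agent announces $Y$ the game ends and the outcome is the Voting-stage winner. If all $p+1$ announce $N$ the outcome is the lottery $\beta(v)$ with $\beta_a(v)=|\{i:v_i=a\}|/n$ and $\beta_b(v)=1-\beta_a(v)$. A subgame-perfect equilibrium is a strategy profile such that at every nonterminal history no agent can obtain a strictly SD-preferred outcome lottery by a unilateral deviation. *)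

(* Defs.v *)
From HB Require Import structures.
From mathcomp Require Import all_boot all_order all_algebra.
Set Implicit Arguments. Unset Strict Implicit. Unset Printing Implicit Defensive.
Import Order.TTheory GRing.Theory Num.Theory.
Local Open Scope ring_scope.

Definition alt := bool.
Definition alt_a : alt := true.
Definition alt_b : alt := false.

Definition nag (p : nat) : nat := p.*2.+1.
Notation agent p := 'I_(nag p).

(* A strict preference over A = {a,b} is determined by the preferred option. *)
Definition profile (p : nat) := agent p -> alt.

Definition Maj (p : nat) (R : profile p) : alt :=
  if (p.+1 <= #|[set i | R i == alt_a]|)%N then alt_a else alt_b.

Definition lottery := {ffun alt -> rat}.
Definition pt (x : alt) : lottery := [ffun y => ((y == x)%:R : rat)].

(* Strict SD preference of an agent whose preferred option is x:
   beta strictly preferred to eta iff beta(x) > eta(x). *)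
Definition sd_strict (x : alt) (beta eta : lottery) : Prop := eta x < beta x.

Definition votes (p : nat) := {ffun agent p -> alt}.
Definition nvotes (p : nat) (v : votes p) (x : alt) : nat := #|[set i | v i == x]|.
Definition winner (p : nat) (v : votes p) : alt :=
  if (nvotes v alt_b < nvotes v alt_a)%N then alt_a else alt_b.
Definition beta (p : nat) (v : votes p) : lottery :=
  [ffun y => (nvotes v y)%:R / (nag p)%:R].

(* Orders pi = (pi_1..pi_{p+1}) of p+1 distinct agents; drawing a uniform
   (p+1)-subset and ordering it uniformly = uniform distribution on these. *)
Definition order (p : nat) := (p.+1).-tuple (agent p).
Definition orders (p : nat) : {set order p} := [set s : order p | uniq s].

(* A (pure) strategy of an agent: a vote, and, at each confirmation-stage
   history (v, pi, t) -- votes v, drawn order pi, the first t drawn agents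
   having announced N -- an announcement (true = Y, false = N); it is used
   only when the agent is the mover, i.e. tnth pi t = the agent. *)
Record strategy (p : nat) := Strategy {
  svote : alt;
  sconf : votes p -> order p -> 'I_p.+1 -> bool }.

Definition sprofile (p : nat) := agent p -> strategy p.

Definition deviate (p : nat) (sigma : sprofile p) (i : agent p) (s : strategy p)
  : sprofile p := fun j => if j == i then s else sigma j.

Definition outcome_from (p : nat) (sigma : sprofile p) (v : votes p)
  (pi : order p) (t : 'I_p.+1) : lottery :=
  if [exists s : 'I_p.+1, (t <= s)%N && sconf (sigma (tnth pi s)) v pi s]
  then pt (winner v) else beta v.

Definition outcome_after_vote (p : nat) (sigma : sprofile p) (v : votes p)
  : lottery :=
  [ffun y => (\sum_(pi in orders p) outcome_from sigma v pi ord0 y)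
             / (#|orders p|)%:R].

Definition vote_profile (p : nat) (sigma : sprofile p) : votes p :=
  [ffun i => svote (sigma i)].

Definition outcome (p : nat) (sigma : sprofile p) : lottery :=
  outcome_after_vote sigma (vote_profile sigma).

Definition SPE (p : nat) (R : profile p) (sigma : sprofile p) : Prop :=
  forall (i : agent p) (s : strategy p),
    ~ sd_strict (R i) (outcome (deviate sigma i s)) (outcome sigma) /\
    (forall v : votes p,
       ~ sd_strict (R i) (outcome_after_vote (deviate sigma i s) v)
                         (outcome_after_vote sigma v)) /\
    (forall (v : votes p) (pi : order p) (t : 'I_p.+1), uniq pi ->
       ~ sd_strict (R i) (outcome_from (deviate sigma i s) v pi t)
                         (outcome_from sigma v pi t)).

(* Main.v *)
Require Import Defs.
From mathcomp Require Import all_boot all_order all_algebra.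
From mathcomp Require Import zify.
Set Implicit Arguments. Unset Strict Implicit. Unset Printing Implicit Defensive.
Import Order.TTheory GRing.Theory Num.Theory.
Local Open Scope ring_scope.

Section Aux.
Variable p : nat.

Lemma nvotes_sum (v : votes p) x : (nvotes v x + nvotes v (~~ x) = nag p)%N.
Proof.
rewrite /nvotes.
have -> : [set i | v i == ~~ x] = ~: [set i | v i == x].
  by apply/setP=> i; rewrite !inE; case: (v i); case: x.
by rewrite cardsC card_ord.
Qed.

Lemma winner_gt (v : votes p) :
  (nvotes v (~~ winner v) < nvotes v (winner v))%N.
Proof.
have := nvotes_sum v alt_a; rewrite /winner /nag /alt_a /alt_b.
move=> Hs; case: (ltnP (nvotes v false) (nvotes v true)) => //= H; move: Hs; rewrite /=; lia.
Qed.

Lemma winner_ge (v : votes p) x : (p.+1 <= nvotes v x)%N -> winner v = x.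
Proof.
move=> Hx; case Hw: (winner v == x); first by apply/eqP.
have Hw' : winner v = ~~ x by case: (winner v) Hw; case: x Hx.
have := winner_gt v; rewrite Hw' negbK.
have := nvotes_sum v x; rewrite /nag; lia.
Qed.

Lemma nag_gt0 : 0 < (nag p)%:R :> rat.
Proof. by rewrite ltr0n. Qed.

Lemma ltr_divn (a b : nat) :
  (a%:R / (nag p)%:R < b%:R / (nag p)%:R :> rat) = (a < b)%N.
Proof. by rewrite ltr_pM2r ?invr_gt0 ?nag_gt0 // ltr_nat. Qed.

Lemma ler_divn (a b : nat) :
  (a%:R / (nag p)%:R <= b%:R / (nag p)%:R :> rat) = (a <= b)%N.
Proof. by rewrite ler_pM2r ?invr_gt0 ?nag_gt0 // ler_nat. Qed.

Lemma ltr_divn1 (a : nat) :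
  (a%:R / (nag p)%:R < 1 :> rat) = (a < nag p)%N.
Proof. by rewrite ltr_pdivrMr ?nag_gt0 // mul1r ltr_nat. Qed.

Lemma ler_divn1 (a : nat) :
  (a%:R / (nag p)%:R <= 1 :> rat) = (a <= nag p)%N.
Proof. by rewrite ler_pdivrMr ?nag_gt0 // mul1r ler_nat. Qed.

Lemma betaE (v : votes p) y : beta v y = (nvotes v y)%:R / (nag p)%:R.
Proof. by rewrite /beta ffunE. Qed.

Lemma ptE x y : pt x y = ((y == x)%:R : rat).
Proof. by rewrite ffunE. Qed.

Lemma nvotes_le (v : votes p) y : (nvotes v y <= nag p)%N.
Proof. by rewrite /nvotes; apply: leq_trans (max_card _) _; rewrite card_ord. Qed.

Lemma lot_bounds (v : votes p) (L : lottery) y :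
  (L = pt (winner v) \/ L = beta v) -> 0 <= L y <= 1.
Proof.
case=> ->; first by rewrite ptE; case: (y == _).
rewrite betaE ler_divn1 nvotes_le andbT.
by rewrite divr_ge0 ?ler0n.
Qed.

Lemma outcome_from_cases (sigma : sprofile p) v pi t :
  outcome_from sigma v pi t = pt (winner v) \/ outcome_from sigma v pi t = beta v.
Proof. rewrite /outcome_from; case: ifP; by [left|right]. Qed.

Lemma card_orders_gt0 (pi0 : Defs.order p) : uniq pi0 -> (0 < #|orders p|)%N.
Proof. by move=> u; apply/card_gt0P; exists pi0; rewrite inE. Qed.

Lemma avg_const (sigma : sprofile p) v (L : lottery) :
  (exists pi0 : Defs.order p, uniq pi0) ->
  (forall pi : Defs.order p, uniq pi -> outcome_from sigma v pi ord0 = L) ->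
  outcome_after_vote sigma v = L.
Proof.
move=> [pi0 u0] H; apply/ffunP=> y; rewrite ffunE.
rewrite (eq_bigr (fun _ => L y)); last by move=> pi; rewrite inE => /H ->.
rewrite sumr_const -[X in X / _]mulr_natr mulfK //.
by rewrite pnatr_eq0 -lt0n (card_orders_gt0 u0).
Qed.

End Aux.

Section Part1.
Variable p : nat.
Implicit Types (v : votes p) (sigma : sprofile p) (R : profile p).

Lemma beta_unan v w : nvotes v w = nag p -> beta v = pt w.
Proof.
move=> Hw; apply/ffunP => y; rewrite betaE ptE.
have := nvotes_sum v w.
case: (eqVneq y w) => [->|hy]; first by rewrite Hw mulfV // pnatr_eq0.
have -> : y = ~~ w by case: y w hy {Hw} => [] [].
by rewrite Hw => /eqP; rewrite -{2}[nag p]addn0 eqn_add2l => /eqP ->; rewrite mul0r.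
Qed.

Lemma L1 R sigma (H : SPE R sigma) v (pi : Defs.order p) (u : uniq pi) s0 :
  R (tnth pi s0) = winner v -> outcome_from sigma v pi ord0 = pt (winner v).
Proof.
move=> Hs0; rewrite /outcome_from; case: ifP => // HY.
set i := tnth pi s0.
have [_ [_ H3]] := H i (Strategy (svote (sigma i)) (fun _ _ _ => true)).
have := H3 v pi s0 u; rewrite /sd_strict.
have -> : outcome_from (deviate sigma i (Strategy (svote (sigma i)) (fun _ _ _ => true))) v pi s0 = pt (winner v).
  rewrite /outcome_from; case: ifP => // /negbT /existsPn /(_ s0).
  by rewrite leqnn /deviate eqxx.
have -> : outcome_from sigma v pi s0 = beta v.
  rewrite /outcome_from; case: ifP => // /existsP [s /andP [_ Hc]].
  by move/negbT/existsPn/(_ s): HY; rewrite Hc.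
rewrite Hs0 ptE eqxx betaE ltr_divn1 => /negP; rewrite -leqNgt => Hn.
rewrite (@beta_unan v (winner v)) //.
by apply/eqP; rewrite eqn_leq Hn nvotes_le.
Qed.

Lemma L2 R sigma (H : SPE R sigma) v (pi : Defs.order p) (u : uniq pi) :
  (forall s, R (tnth pi s) != winner v) -> (0 < nvotes v (~~ winner v))%N ->
  outcome_from sigma v pi ord0 = beta v.
Proof.
move=> Hn Hpos; rewrite /outcome_from; case: ifP => // /existsP [s0 /andP [_ Hc0]].
case: (@arg_maxnP _ s0 (fun s : 'I_p.+1 => sconf (sigma (tnth pi s)) v pi s)
          (fun s => val s) Hc0) => s Hs Hmax.
set i := tnth pi s.
have [_ [_ H3]] := H i (Strategy (svote (sigma i)) (fun _ _ _ => false)).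
have := H3 v pi s u; rewrite /sd_strict.
have -> : outcome_from sigma v pi s = pt (winner v).
  rewrite /outcome_from; case: ifP => // /negbT /existsPn /(_ s).
  by rewrite leqnn Hs.
have -> : outcome_from (deviate sigma i (Strategy (svote (sigma i)) (fun _ _ _ => false))) v pi s = beta v.
  rewrite /outcome_from; case: ifP => // /existsP [s' /andP [Hle]].
  rewrite /deviate; case: eqP => // Hne Hc.
  have := Hmax s' Hc => /= Hle'.
  have Es : s' = s by apply/val_inj/eqP; rewrite eqn_leq Hle Hle'.
  by case: Hne; rewrite Es.
have Ri : R i = ~~ winner v by move: (Hn s); rewrite -/i; case: (R i); case: (winner v).
move=> Hns; exfalso; apply: Hns.
rewrite Ri ptE betaE.
have -> : (~~ winner v == winner v) = false by case: (winner v).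
by rewrite divr_gt0 ?nag_gt0 // ltr0n.
Qed.

Lemma has_lover R x (Hx : (p.+1 <= #|[set i | R i == x]|)%N)
  (pi : Defs.order p) (u : uniq pi) : exists s, R (tnth pi s) = x.
Proof.
case: (boolP [exists s, R (tnth pi s) == x]) => [/existsP [s /eqP]|/existsPn Hn].
  by exists s.
exfalso.
have : (#|pi| <= #|~: [set i | R i == x]|)%N.
  apply/subset_leq_card/subsetP => j /tnthP [s ->].
  by rewrite !inE Hn.
rewrite (card_uniqP u) size_tuple.
have := cardsC [set i | R i == x]; rewrite card_ord /nag; move: Hx; move: (#|[set i | R i == x]|) (#|~: [set i | R i == x]|) => a b; lia.
Qed.

Lemma all_lovers R x (Hx : (p.+1 <= #|[set i | R i == x]|)%N) :
  exists pi : Defs.order p, uniq pi /\ forall s, R (tnth pi s) = x.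
Proof.
set S := [set i | R i == x] in Hx *.
exists [tuple (@enum_val _ (pred_of_set S) (widen_ord Hx s)) | s < p.+1]; split.
  apply/tuple_uniqP => s1 s2; rewrite !tnth_mktuple => /enum_val_inj /(congr1 val) /= E.
  exact: val_inj.
move=> s; rewrite tnth_mktuple.
have := enum_valP (widen_ord Hx s); rewrite inE => /eqP.
done.
Qed.

Lemma Maj_count R : (p.+1 <= #|[set i | R i == Maj R]|)%N.
Proof.
rewrite /Maj; case: ifP => // /negbT; rewrite -ltnNge => H.
have := cardsC [set i | R i == alt_a]; rewrite card_ord /nag.
have -> : ~: [set i | R i == alt_a] = [set i | R i == alt_b].
  by apply/setP=> i; rewrite !inE; case: (R i).
move: H; move: (#|[set i | R i == alt_a]|) (#|[set i | R i == alt_b]|) => a b; lia.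
Qed.

End Part1.

Lemma part1 p (R : profile p) (sigma : sprofile p) (H : SPE R sigma) :
  outcome sigma = pt (Maj R).
Proof.
have Hm := Maj_count R.
move: Hm; set m := Maj R => Hm.
have [pi0 [u0 Hpi0]] := all_lovers Hm.
have Npos : (0 < #|orders p|)%N := card_orders_gt0 u0.
have Lwin : forall v, winner v = m -> outcome_after_vote sigma v = pt m.
  move=> v Hw; apply: avg_const; first by exists pi0.
  move=> pi u; have [s Hs] := has_lover Hm u; rewrite -Hw; apply: (L1 H u (s0:=s)).
  by rewrite Hs Hw.
rewrite /outcome; set v := vote_profile sigma.
case: (eqVneq (winner v) m) => [Hw|Hw]; first exact: Lwin.
exfalso.
have Hwm : winner v = ~~ m by move: Hw; case: (winner v); case: (m).
have [i Hi] : exists i, (R i == m) && (v i == ~~ m).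
  have H1 := winner_gt v; have H2 := nvotes_sum v (winner v).
  have : (0 < #|[set i | R i == m] :&: [set i | v i == ~~ m]|)%N.
    have := cardsU [set i | R i == m] [set i | v i == ~~ m].
    have := max_card (mem ([set i | R i == m] :|: [set i | v i == ~~ m])).
    rewrite card_ord.
    move: H1 H2; rewrite Hwm negbK /nvotes /nag.
    move: Hm.
    move: (#|[set i | R i == m] :|: [set i | v i == ~~ m]|)
          (#|[set i | R i == m] :&: [set i | v i == ~~ m]|)
          (#|[set i | R i == m]|) (#|[set i | v i == ~~ m]|)
          (#|[set i | v i == m]|) => a b c d e; lia.
  by case/card_gt0P => i; rewrite !inE => Hi; exists i.
case/andP: Hi => /eqP Ri /eqP vi.
set s := Strategy m (sconf (sigma i)).
set sigma' := deviate sigma i s.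
have Hconf : forall j, sconf (sigma' j) = sconf (sigma j).
  by move=> j; rewrite /sigma' /deviate; case: eqP => // ->.
have Hof : forall v0 pi t, outcome_from sigma' v0 pi t = outcome_from sigma v0 pi t.
  move=> v0 pi t; rewrite /outcome_from.
  have -> : [exists s0 : 'I_p.+1, (t <= s0)%N && sconf (sigma' (tnth pi s0)) v0 pi s0]
          = [exists s0 : 'I_p.+1, (t <= s0)%N && sconf (sigma (tnth pi s0)) v0 pi s0].
    by apply: eq_existsb => k; rewrite Hconf.
  by [].
have Hav : forall v0, outcome_after_vote sigma' v0 = outcome_after_vote sigma v0.
  move=> v0; apply/ffunP => y; rewrite !ffunE; congr (_ / _).
  by apply: eq_bigr => pi _; rewrite Hof.
set v' := vote_profile sigma'.
have Ev' : forall j, v' j = if j == i then m else v j.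
  by move=> j; rewrite /v' /v !ffunE /sigma' /deviate; case: eqP.
have [H1 _] := H i s.
apply: H1; rewrite /sd_strict /outcome -/v' Hav -/v Ri.
have Hbnd : forall pi, outcome_from sigma v pi ord0 m <= (nvotes v m)%:R / (nag p)%:R.
  move=> pi; case: (outcome_from_cases sigma v pi ord0) => ->; last by rewrite betaE.
  rewrite ptE Hwm; have -> : (m == ~~ m) = false by case: (m).
  by rewrite divr_ge0 ?ler0n.
have Hnv' : nvotes v' m = (nvotes v m).+1.
  rewrite /nvotes.
  have -> : [set j | v' j == m] = i |: [set j | v j == m].
    apply/setP => j; rewrite !inE Ev'; case: (eqVneq j i) => [->|hne] //=.
    by rewrite !eqxx.
  rewrite cardsU1 inE vi.
  by have -> : (~~ m == m) = false by case: (m).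
have Hlt : (nvotes v m < nag p)%N.
  have := winner_gt v; have := nvotes_le v (winner v); rewrite Hwm negbK.
  move=> a b; exact: leq_trans b a.
case: (eqVneq (winner v') m) => [Hw'|Hw'].
  rewrite (Lwin v' Hw') ptE eqxx ffunE ltr_pdivrMr ?ltr0n // mul1r.
  apply: le_lt_trans (ler_sum _ (fun pi _ => Hbnd pi)) _.
  rewrite sumr_const -(mulr_natr ((nvotes v m)%:R / (nag p)%:R)) -[X in _ < X]mul1r ltr_pM2r ?ltr0n //.
  by rewrite ltr_divn1.
have Hw2 : winner v' = ~~ m by move: Hw'; case: (winner v'); case: (m).
rewrite !ffunE ltr_pM2r ?invr_gt0 ?ltr0n //.
rewrite (bigD1 pi0) ?inE // [X in _ < X](bigD1 pi0) ?inE //=.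
apply: ltr_leD.
  rewrite (L2 H u0 (v:=v')); first last.
  - by rewrite Hw2 negbK Hnv'.
  - by move=> s0; rewrite Hpi0 Hw2; case: (m).
  apply: le_lt_trans (Hbnd pi0) _.
  by rewrite betaE Hnv' ltr_divn.
apply: ler_sum => pi /andP [Hpi _]; move: Hpi; rewrite inE => u.
case: (boolP [exists s0, R (tnth pi s0) == ~~ m]) => [/existsP [s0 /eqP Hs0]|/existsPn Hn].
  rewrite (L1 H u (s0:=s0)); last by rewrite Hs0 Hwm.
  rewrite (L1 H u (s0:=s0)); last by rewrite Hs0 Hw2.
  by rewrite Hwm Hw2.
rewrite (L2 H u (v:=v')); first last.
- by rewrite Hw2 negbK Hnv'.
- by move=> s0; rewrite Hw2.
apply: le_trans (Hbnd pi) _.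
by rewrite betaE Hnv' ler_divn.
Qed.

Section Part2.
Variable p : nat.
Variable R : profile p.

Definition sigma0 : sprofile p :=
  fun j => Strategy (R j) (fun v _ _ => R j == winner v).

Lemma win_all (sigma' : sprofile p) v :
  winner v = Maj R ->
  (forall j pi s, R j = Maj R -> sconf (sigma' j) v pi s = true) ->
  outcome_after_vote sigma' v = pt (Maj R).
Proof.
move=> Hw Hc; have Hm := Maj_count R.
have [pi0 [u0 _]] := all_lovers Hm.
apply: avg_const; first by exists pi0.
move=> pi u; have [s Hs] := has_lover Hm u.
rewrite /outcome_from -Hw; case: ifP => // /negbT /existsPn /(_ s).
by rewrite Hc.
Qed.

Lemma Gle i s v pi t :
  outcome_from (deviate sigma0 i s) v pi t (R i)
  <= outcome_from sigma0 v pi t (R i).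
Proof.
rewrite /outcome_from; case: ifP => Yd; case: ifP => Yo //.
- case: (eqVneq (R i) (winner v)) => Hx.
    exfalso; move/negbT/existsPn: Yo => Yo.
    case/existsP: Yd => s' /andP [Hle]; rewrite /deviate; case: eqP => [E|Hne] Hc.
      by move: (Yo s'); rewrite Hle E /sigma0 /= Hx eqxx.
    by move: (Yo s'); rewrite Hle Hc.
  rewrite ptE (negbTE Hx) betaE.
  by rewrite divr_ge0 ?ler0n.
- case: (eqVneq (R i) (winner v)) => Hx.
    by rewrite ptE Hx eqxx -Hx; case/andP: (lot_bounds (R i) (or_intror (erefl (beta v)))).
  exfalso; move/negbT/existsPn: Yd => Yd.
  case/existsP: Yo => s' /andP [Hle]; rewrite /sigma0 /= => /eqP Hc.
  move: (Yd s'); rewrite Hle /deviate; case: eqP => [E|Hne].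
    by move: Hx; rewrite -E Hc eqxx.
  by rewrite /sigma0 /= Hc eqxx.
Qed.

Lemma outcome0 : outcome sigma0 = pt (Maj R).
Proof.
have Hm := Maj_count R.
have Hw : winner (vote_profile sigma0) = Maj R.
  apply: winner_ge; move: Hm; rewrite /nvotes.
  suff -> : [set i | vote_profile sigma0 i == Maj R] = [set i | R i == Maj R] by [].
  by apply/setP => j; rewrite !inE ffunE.
apply: win_all => //; by move=> j pi s Hj; rewrite /= Hj Hw eqxx.
Qed.

Lemma SPE0 : SPE R sigma0.
Proof.
have Hm := Maj_count R.
have [pi0 [u0 _]] := all_lovers Hm.
have Npos : (0 < #|orders p|)%N := card_orders_gt0 u0.
move=> i s; split; [|split].
- rewrite /sd_strict outcome0.
  case: (eqVneq (R i) (Maj R)) => Hx.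
    rewrite Hx ptE eqxx; apply/negP; rewrite -leNgt.
    rewrite ffunE ler_pdivrMr ?ltr0n // mul1r.
    apply: (@le_trans _ _ (\sum_(pi in orders p) (1:rat))).
      apply: ler_sum => pi _.
      by case/andP: (lot_bounds (Maj R) (outcome_from_cases (deviate sigma0 i s) (vote_profile (deviate sigma0 i s)) pi ord0)).
    by rewrite sumr_const.
  rewrite /outcome (@win_all _ (vote_profile (deviate sigma0 i s))).
  + by rewrite ltxx.
  + apply: winner_ge; apply: leq_trans Hm _; apply/subset_leq_card/subsetP => j.
    rewrite !inE ffunE /deviate; case: (eqVneq j i) => [->|_] //=.
    by rewrite (negbTE Hx).
  + move=> j pi t Hj; rewrite /deviate; case: eqP => [E|_].
      by move: Hx; rewrite -E Hj eqxx.
    rewrite /= Hj; apply/eqP/esym; apply: winner_ge; apply: leq_trans Hm _.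
    apply/subset_leq_card/subsetP => k.
    rewrite !inE ffunE /deviate; case: (eqVneq k i) => [->|_] //=.
    by rewrite (negbTE Hx).
- move=> v; rewrite /sd_strict !ffunE; apply/negP; rewrite -leNgt.
  rewrite ler_wpM2r ?invr_ge0 ?ler0n //.
  by apply: ler_sum => pi _; apply: Gle.
- move=> v pi t _; rewrite /sd_strict; apply/negP; rewrite -leNgt; exact: Gle.
Qed.

End Part2.

Theorem proposition2 (p : nat) (R : profile p) :
  (forall sigma : sprofile p, SPE R sigma -> outcome sigma = pt (Maj R)) /\
  (exists sigma : sprofile p, SPE R sigma /\ outcome sigma = pt (Maj R)).
Proof.
split; first by move=> sigma H; apply: part1.
by exists (sigma0 R); split; [apply: SPE0 | apply: outcome0].
Qed.
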